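(* For all integers $m,n\ge 2$, $\chi_{ei}(P_m\square P_n)=2$.
   Context: All graphs are finite and simple. $P_k$ denotes the path on $k$ vertices. A path $P_4$ in $G$ is a sequence $uxyv$ of four distinct vertices with $ux,xy,yv\in E(G)$; $u,v$ are its end vertices. An $e$-injective $k$-coloring of $G$ is a function $f:V(G)\to\{1,\dots,k\}$ with $f(u)\ne f(v)$ whenever $u,v$ are the end vertices of some path $P_4$ in $G$; $\chi_{ei}(G)$ is the least such $k$. In the Cartesian product $G\square H$ (vertex set $V(G)\times V(H)$) two vertices are adjacent if they are adjacent in one coordinate and equal in the other. *)

(* Defs.v *)
From mathcomp Require Import all_boot.
Set Implicit Arguments. Unset Strict Implicit. Unset Printing Implicit Defensive.

Record sgraph := SGraph {
  vertex :> finType;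
  adj : rel vertex;
  adj_sym : symmetric adj;
  adj_irr : irreflexive adj }.

Definition p4_ends (G : sgraph) (u v : G) : bool :=
  [exists x : G, exists y : G,
    [&& uniq [:: u; x; y; v], adj u x, adj x y & adj y v]].

Definition ei_coloring (G : sgraph) (k : nat) (f : G -> 'I_k) : bool :=
  [forall u : G, forall v : G, p4_ends u v ==> (f u != f v)].

Definition ei_colorable (G : sgraph) (k : nat) : bool :=
  [exists f : {ffun G -> 'I_k}, ei_coloring f].

(* chi_ei(G): least k admitting an e-injective k-coloring.  Such k <= #|G|
   always exists (injective coloring), so the min over k <= #|G| is the true min. *)
Definition chi_ei (G : sgraph) : nat :=
  \big[minn/#|G|]_(k < #|G|.+1 | ei_colorable G k) k.

Definition path_adj (m : nat) : rel 'I_m := fun i j => (i.+1 == j) || (j.+1 == i).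

Lemma path_adj_sym m : symmetric (@path_adj m).
Proof. by move=> i j; rewrite /path_adj orbC. Qed.

Lemma path_adj_irr m : irreflexive (@path_adj m).
Proof. by move=> i; rewrite /path_adj orbb; apply/negbTE; rewrite eqn_leq ltnn. Qed.

Definition Path (m : nat) : sgraph := SGraph (@path_adj_sym m) (@path_adj_irr m).

Definition cart_adj (G H : sgraph) : rel (G * H)%type := fun a b =>
  (adj a.1 b.1 && (a.2 == b.2)) || ((a.1 == b.1) && adj a.2 b.2).

Lemma cart_adj_sym G H : symmetric (@cart_adj G H).
Proof. by move=> a b; rewrite /cart_adj (@adj_sym G a.1) (@adj_sym H a.2) (eq_sym a.1) (eq_sym a.2). Qed.

Lemma cart_adj_irr G H : irreflexive (@cart_adj G H).
Proof. by move=> a; rewrite /cart_adj !adj_irr !eqxx. Qed.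

Definition cart (G H : sgraph) : sgraph := SGraph (@cart_adj_sym G H) (@cart_adj_irr G H).

(* Main.v *)
Require Import Defs.
From mathcomp Require Import all_boot.

Lemma flip m n (a b : cart (Path m) (Path n)) :
  adj a b -> odd (a.1 + a.2) = ~~ odd (b.1 + b.2).
Proof.
case: a b => [a1 a2] [b1 b2]; rewrite /= /cart_adj /= /path_adj.
case/orP => /andP [H1 H2].
- rewrite (eqP H2); case/orP: H1 => /eqP <-; rewrite ?addSn /= ?negbK //.
- rewrite (eqP H1); case/orP: H2 => /eqP <-; rewrite ?addnS /= ?negbK //.
Qed.

Arguments flip {m n a b}.
Lemma odd_lt2 (b : bool) : b < 2. Proof. by case: b. Qed.

Definition col m n (v : cart (Path m) (Path n)) : 'I_2 :=
  @Ordinal 2 (odd (v.1 + v.2)) (odd_lt2 _).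

Lemma bigmin_le_seq (I : eqType) (r : seq I) (P : pred I) (F : I -> nat) x0 j :
  j \in r -> P j -> \big[minn/x0]_(i <- r | P i) F i <= F j.
Proof.
elim: r => [//|a r IH]; rewrite inE big_cons => /orP [/eqP <- ->|hj hP].
  exact: geq_minl.
case: (P a); last exact: IH.
exact: leq_trans (geq_minr _ _) (IH hj hP).
Qed.

Theorem theorem4p2 (m n : nat) : 2 <= m -> 2 <= n -> chi_ei (cart (Path m) (Path n)) = 2.
Proof.
move=> hm hn.
set G := cart (Path m) (Path n).
have cardG : 2 < #|G|.+1.
  have -> : #|G| = m * n by rewrite /G /= card_prod !card_ord.
  by rewrite ltnS (leq_trans hm) // leq_pmulr // (leq_trans _ hn).
have col2 : ei_colorable G 2.
  apply/existsP; exists [ffun v : G => @col m n v]; apply/forallP => u; apply/forallP => v.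
  apply/implyP => /existsP [x /existsP [y /and4P [_ h1 h2 h3]]].
  rewrite !ffunE; apply/negP => /eqP /(congr1 val) /=.
  rewrite (flip h1) (flip h2) (flip h3).
  by case: odd.
have not01 : forall k, k < 2 -> ~~ ei_colorable G k.
  move=> k hk; apply/negP => /existsP [f /forallP hf].
  have o0 : 0 < m by apply: leq_trans hm.
  have o1 : 1 < m by [].
  have p0 : 0 < n by apply: leq_trans hn.
  have p1 : 1 < n by [].
  pose u : G := (Ordinal o0, Ordinal p0).
  pose v : G := (Ordinal o0, Ordinal p1).
  pose x : G := (Ordinal o1, Ordinal p0).
  pose y : G := (Ordinal o1, Ordinal p1).
  have := hf u; move/forallP/(_ v)/implyP.
  have hp : p4_ends u v.
    apply/existsP; exists x; apply/existsP; exists y.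
    by rewrite /= /cart_adj /path_adj /=.
  move/(_ hp).
  case: k hk f {hf} => [|[|//]] _ f.
  - by case: (f u).
  - by case: (f u) => [[|//] ?]; case: (f v) => [[|//] ?].
rewrite /chi_ei.
apply/eqP; rewrite eqn_leq; apply/andP; split.
  exact: (@bigmin_le_seq _ _ _ _ _ (Ordinal cardG) (mem_index_enum _) col2).
apply: (big_ind (fun k => 2 <= k)).
- by rewrite -ltnS.
- by move=> a b ha hb; rewrite leq_min ha hb.
- move=> i hi; rewrite leqNgt; apply/negP => hlt.
  by move: (not01 _ hlt); rewrite hi.
Qed.
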